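(* Let $\tilde u\in T^1\mathbb H$ be tangent to an oriented pair $(\tilde H,p)$, and write $\tilde v=\mathrm{Wind}_{(\tilde H,p)}(\tilde u)$, $\tau=\tau_{\tilde H,p,\tilde u}$, $\ell=\ell(\tilde H,p)$. Then for every $t\ge 0$, $$\min\{d_1(g_{t+\tau}\tilde v, g_t\tilde u),\ d_1(g_{t+\tau}\tilde v, p\,g_t\tilde u)\}\le 12\,\ell.$$
   Context: $\mathbb H$ is the hyperbolic plane with distance $d$; for $v\in T^1\mathbb H$, $t\mapsto v(t)$ is the unit-speed geodesic with initial vector $v$, $g_tv$ its tangent vector at time $t$, $v(+\infty)$ its forward endpoint. $d_1(v,w)=d(v(0),w(0))+d(v(1),w(1))$ on $T^1\mathbb H$. Busemann function: $B_\xi(x,y)=\lim_{t\to\infty}(d(x,c(t))-d(y,c(t)))$ for a geodesic ray $c$ converging to $\xi$. For a horocycle $\tilde H$ and a parabolic isometry $p$ preserving it: $\ell(\tilde H,p)$ is the horocyclic arc length between $x$ and $px$ for $x\in\tilde H$; the positive orientation is that of an arc-length parametrization with $p\tilde H(s)=\tilde H(s+\ell(\tilde H,p))$. $\tilde u$ is tangent to the oriented pair $(\tilde H,p)$ if $\tilde u(\mathbb R^+)$ is tangent to $\tilde H$ at some $\tilde u(t_0)=\tilde H(s_0)$, $t_0\ge0$, with $\frac{d\tilde u}{dt}(t_0)=\frac{d\tilde H}{ds}(s_0)$ for a positively oriented parametrization. The winding $\mathrm{Wind}_{(\tilde H,p)}(\tilde u)$ is the unique $w\in T^1\mathbb H$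 with $w(0)=\tilde u(0)$ and $w(+\infty)=p\,\tilde u(+\infty)$. The winding time is $\tau_{\tilde H,p,\tilde u}=B_{\tilde u(+\infty)}(p^{-1}\tilde u(0),\tilde u(0))$. *)

(* Defs.v *)
From Stdlib Require Import Reals.
From Coquelicot Require Import Coquelicot.
Open Scope R_scope.

Definition pt := (R * R)%type.

Definition inH (z : pt) : Prop := 0 < snd z.

Definition arcosh (x : R) : R := ln (x + sqrt (x ^ 2 - 1)).

Definition hdist (z w : pt) : R :=
  arcosh (1 + ((fst z - fst w) ^ 2 + (snd z - snd w) ^ 2)
              / (2 * snd z * snd w)).

(* A unit tangent vector v is identified with its unit-speed geodesic
   t |-> v(t) (isometric embedding R -> H); g_t v is the time shift. *)
Definition is_geodesic (c : R -> pt) : Prop :=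
  (forall t, inH (c t)) /\ (forall s t, hdist (c s) (c t) = Rabs (s - t)).

Definition gflow (t : R) (c : R -> pt) : R -> pt := fun s => c (s + t).

Definition dist_d1 (v w : R -> pt) : R := hdist (v 0) (w 0) + hdist (v 1) (w 1).

(* v(+oo) = w(+oo): the forward rays are asymptotic *)
Definition same_fwd_endpoint (v w : R -> pt) : Prop :=
  exists M, forall t, 0 <= t -> hdist (v t) (w t) <= M.

(* Busemann function B_{c(+oo)}(x,y), computed along the ray c itself *)
Definition busemann (c : R -> pt) (x y : pt) : R :=
  real (Lim (fun t => hdist x (c t) - hdist y (c t)) p_infty).

(* Moebius transformations z |-> (a z + b)/(c z + d) *)
Record mob := Mob { ma : R; mb : R; mc : R; md : R }.

Definition mob_act (m : mob) (z : pt) : pt :=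
  let x := fst z in let y := snd z in
  let D := (mc m * x + md m) ^ 2 + (mc m * y) ^ 2 in
  (((ma m * x + mb m) * (mc m * x + md m) + ma m * mc m * y ^ 2) / D,
   (ma m * md m - mb m * mc m) * y / D).

Definition mob_inv (m : mob) : mob := Mob (md m) (- mb m) (- mc m) (ma m).

Definition is_parabolic (m : mob) : Prop :=
  ma m * md m - mb m * mc m = 1 /\ (ma m + md m) ^ 2 = 4 /\
  ~ (ma m = 1 /\ mb m = 0 /\ mc m = 0 /\ md m = 1) /\
  ~ (ma m = -1 /\ mb m = 0 /\ mc m = 0 /\ md m = -1).

Definition is_horocycle (S : pt -> Prop) : Prop :=
  (exists c, 0 < c /\ forall z, S z <-> snd z = c) \/
  (exists x0 r, 0 < r /\ forall z,
      S z <-> ((fst z - x0) ^ 2 + (snd z - r) ^ 2 = r ^ 2 /\ 0 < snd z)).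

Definition arclength_param (S : pt -> Prop) (h : R -> pt) : Prop :=
  (forall s, S (h s)) /\ (forall z, S z -> exists s, h s = z) /\
  (forall s1 s2, h s1 = h s2 -> s1 = s2) /\
  forall s, exists a b, is_derive (fun r => fst (h r)) s a /\
                        is_derive (fun r => snd (h r)) s b /\
                        a ^ 2 + b ^ 2 = (snd (h s)) ^ 2.

(* h is a positively oriented arc-length parametrization of the horocycle S
   for p, and ell = ell(S,p):   p (h s) = h (s + ell). *)
Definition pos_param (S : pt -> Prop) (p : mob) (h : R -> pt) (ell : R) : Prop :=
  arclength_param S h /\ 0 < ell /\ forall s, mob_act p (h s) = h (s + ell).

Definition tangent_to (u h : R -> pt) : Prop :=
  exists t0 s0 a b, 0 <= t0 /\ u t0 = h s0 /\
    is_derive (fun r => fst (u r)) t0 a /\ is_derive (fun r => snd (u r)) t0 b /\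
    is_derive (fun r => fst (h r)) s0 a /\ is_derive (fun r => snd (h r)) s0 b.

(* w = Wind_{(S,p)}(u): w(0) = u(0), w(+oo) = p u(+oo) *)
Definition is_winding (p : mob) (u w : R -> pt) : Prop :=
  is_geodesic w /\ w 0 = u 0 /\ same_fwd_endpoint w (fun t => mob_act p (u t)).

Definition winding_time (p : mob) (u : R -> pt) : R :=
  busemann u (mob_act (mob_inv p) (u 0)) (u 0).

(* Main.v *)
Require Import Defs.
From Stdlib Require Import Reals Lra Psatz FunctionalExtensionality.
From Coquelicot Require Import Coquelicot.
Open Scope R_scope.

Definition ch (x : R) : R := (exp x + exp (- x)) / 2.
Definition Qd (z w : pt) : R :=
  1 + ((fst z - fst w) ^ 2 + (snd z - snd w) ^ 2) / (2 * snd z * snd w).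

Lemma exp_neg_inv x : exp (- x) = / exp x.
Proof. apply exp_Ropp. Qed.

Lemma exp_ge1 d : 0 <= d -> 1 <= exp d.
Proof. intro. generalize (exp_ineq1_le d). lra. Qed.

Lemma ch_ge1 x : 1 <= ch x.
Proof.
  unfold ch. rewrite exp_neg_inv. assert (H := exp_pos x).
  set (e := exp x) in *.
  assert (e + / e - 2 = (e - 1) ^ 2 / e) by (field; lra).
  assert (0 <= (e - 1) ^ 2 / e) by (apply Rdiv_le_0_compat; [apply pow2_ge_0 | lra]).
  lra.
Qed.

Lemma ch_even x : ch (- x) = ch x.
Proof. unfold ch. rewrite Ropp_involutive. lra. Qed.

Lemma ch_abs x : ch (Rabs x) = ch x.
Proof. destruct (Rcase_abs x); [rewrite Rabs_left by lra; apply ch_even | rewrite Rabs_right by lra; auto]. Qed.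

Lemma arcosh_ch d : 0 <= d -> arcosh (ch d) = d.
Proof.
  intro Hd. unfold arcosh, ch. rewrite exp_neg_inv.
  assert (H := exp_pos d). assert (H1 := exp_ge1 d Hd).
  set (e := exp d) in *.
  assert (E : ((e + / e) / 2) ^ 2 - 1 = ((e - / e) / 2) ^ 2) by (field; lra).
  rewrite E. rewrite sqrt_pow2.
  - replace ((e + / e) / 2 + (e - / e) / 2) with e by (field; lra).
    unfold e; apply ln_exp.
  - assert (/ e <= 1). { rewrite <- Rinv_1. apply Rinv_le_contravar; lra. }
    lra.
Qed.

Lemma ch_arcosh x : 1 <= x -> ch (arcosh x) = x.
Proof.
  intro Hx. unfold arcosh, ch.
  assert (Hs : 0 <= x ^ 2 - 1) by nra.
  assert (Hs2 := sqrt_sqrt _ Hs).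
  assert (Hs3 := sqrt_pos (x ^ 2 - 1)).
  set (s := sqrt (x ^ 2 - 1)) in *.
  assert (Hp : 0 < x + s) by lra.
  rewrite exp_neg_inv, exp_ln by lra.
  field_simplify; [|lra]. 
  replace (s ^ 2) with (x^2 - 1) by (simpl; lra). field. lra.
Qed.

Lemma arcosh_ge0 x : 1 <= x -> 0 <= arcosh x.
Proof.
  intro Hx. unfold arcosh. rewrite <- ln_1. apply ln_le; try lra.
  assert (0 <= sqrt (x ^ 2 - 1)) by apply sqrt_pos. lra.
Qed.

Lemma arcosh_le x y : 1 <= x -> x <= y -> arcosh x <= arcosh y.
Proof.
  intros Hx Hxy. unfold arcosh.
  assert (0 <= sqrt (x ^ 2 - 1)) by apply sqrt_pos.
  apply ln_le; [lra|].
  assert (sqrt (x ^ 2 - 1) <= sqrt (y ^ 2 - 1)) by (apply sqrt_le_1_alt; nra).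
  lra.
Qed.

Lemma Qd_ge1 z w : inH z -> inH w -> 1 <= Qd z w.
Proof.
  unfold inH, Qd; intros Hz Hw.
  assert (0 <= ((fst z - fst w) ^ 2 + (snd z - snd w) ^ 2) / (2 * snd z * snd w)).
  { apply Rdiv_le_0_compat; [apply Rplus_le_le_0_compat; apply pow2_ge_0|].
    apply Rmult_lt_0_compat; lra. }
  lra.
Qed.

Lemma hdist_Qd z w : hdist z w = arcosh (Qd z w).
Proof. reflexivity. Qed.

Lemma ch_hdist z w : inH z -> inH w -> ch (hdist z w) = Qd z w.
Proof. intros; apply ch_arcosh, Qd_ge1; auto. Qed.

Lemma hdist_ge0 z w : inH z -> inH w -> 0 <= hdist z w.
Proof. intros; apply arcosh_ge0, Qd_ge1; auto. Qed.

Lemma geod_Q c s t : is_geodesic c -> Qd (c s) (c t) = ch (s - t).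
Proof.
  intros [Hin Hd]. rewrite <- ch_hdist by auto. rewrite Hd. apply ch_abs.
Qed.

Lemma hdist_le_ch z w d : inH z -> inH w -> 0 <= d -> Qd z w <= ch d -> hdist z w <= d.
Proof.
  intros Hz Hw Hd HQ. rewrite hdist_Qd, <- (arcosh_ch d Hd).
  apply arcosh_le; auto. apply Qd_ge1; auto.
Qed.

Lemma ch_lower d : 0 <= d -> 1 + d ^ 2 / 8 <= ch d.
Proof.
  intro Hd. unfold ch.
  assert (HA : 1 + d / 2 <= exp (d / 2)).
  { apply exp_ineq1_le. }
  assert (Ea : exp d = exp (d/2) ^ 2).
  { simpl. rewrite Rmult_1_r, <- exp_plus. f_equal; lra. }
  rewrite exp_neg_inv, Ea. assert (Hp := exp_pos (d/2)).
  set (A := exp (d / 2)) in *.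
  assert (H1 : d / 2 <= A - / A).
  { assert (/ A <= / (1 + d/2)) by (apply Rinv_le_contravar; lra).
    assert (/ (1 + d/2) <= 1) by (rewrite <- Rinv_1; apply Rinv_le_contravar; lra).
    assert (1 + d/2 - / (1 + d/2) >= d/2) ; [|lra].
    assert (H2 : (1 + d/2) - / (1 + d/2) = d/2 + (d/2) / (1 + d/2)) by (field; lra).
    rewrite H2. assert (0 <= (d/2) / (1 + d/2)) by (apply Rdiv_le_0_compat; lra). lra. }
  assert (E2 : (A ^ 2 + / A ^ 2) / 2 = 1 + (A - / A) ^ 2 / 2) by (field; lra).
  rewrite E2. assert (0 <= d/2) by lra. nra.
Qed.

Lemma hdist_bound z w d : inH z -> inH w -> 0 <= d ->
  (fst z - fst w) ^ 2 + (snd z - snd w) ^ 2 <= snd z * snd w * d ^ 2 / 4 ->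
  hdist z w <= d.
Proof.
  intros Hz Hw Hd H. apply hdist_le_ch; auto.
  assert (H1 := ch_lower d Hd). unfold Qd. unfold inH in *.
  assert (((fst z - fst w) ^ 2 + (snd z - snd w) ^ 2) / (2 * snd z * snd w) <= d ^ 2 / 8); [|lra].
  apply Rmult_le_reg_r with (2 * snd z * snd w); [nra|].
  unfold Rdiv. rewrite Rmult_assoc, Rinv_l by nra. nra.
Qed.

Definition mdet (m : mob) := ma m * md m - mb m * mc m.
Definition mmul (M N : mob) : mob :=
  Mob (ma M * ma N + mb M * mc N) (ma M * mb N + mb M * md N)
      (mc M * ma N + md M * mc N) (mc M * mb N + md M * md N).
Definition Dm (m : mob) (z : pt) := (mc m * fst z + md m) ^ 2 + (mc m * snd z) ^ 2.

Lemma Dm_pos m z : mdet m <> 0 -> 0 < snd z -> 0 < Dm m z.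
Proof.
  destruct m as [a b c d]; destruct z as [x y].
  unfold mdet, Dm; simpl; intros Hd Hy. destruct (Req_dec c 0) as [E|E].
  - subst c. assert (Hd0 : d <> 0) by (intro F; apply Hd; rewrite F; ring).
    pose proof (Rsqr_pos_lt d Hd0). unfold Rsqr in *.
    assert (0 <= (0 * y) ^ 2) by apply pow2_ge_0. simpl in *. lra.
  - assert (Hc : c * y <> 0) by (apply Rmult_integral_contrapositive; split; lra).
    pose proof (Rsqr_pos_lt _ Hc). unfold Rsqr in *.
    assert (0 <= (c * x + d) ^ 2) by apply pow2_ge_0. simpl in *. lra.
Qed.

Lemma mob_act_eq m z : mob_act m z =
  (((ma m * fst z + mb m) * (mc m * fst z + md m) + ma m * mc m * snd z ^ 2) / Dm m z,
   mdet m * snd z / Dm m z).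
Proof. reflexivity. Qed.

Lemma mob_inH m z : 0 < mdet m -> inH z -> inH (mob_act m z).
Proof.
  intros Hd Hz. unfold inH in *. rewrite mob_act_eq. simpl.
  assert (0 < Dm m z) by (apply Dm_pos; auto; lra).
  apply Rdiv_lt_0_compat; auto. apply Rmult_lt_0_compat; auto.
Qed.

Lemma mdet_mul M N : mdet (mmul M N) = mdet M * mdet N.
Proof. unfold mdet, mmul; simpl; ring. Qed.

Lemma Dm_comp M N z : Dm N z <> 0 ->
  Dm M (mob_act N z) = Dm (mmul M N) z / Dm N z.
Proof.
  intro H. rewrite mob_act_eq. revert H.
  destruct M as [a b c d]; destruct N as [a' b' c' d']; destruct z as [x y].
  unfold Dm, mdet, mmul; simpl. intro H. field. intro F; apply H; rewrite <- F; ring.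
Qed.

Lemma mob_comp M N z : 0 < mdet M -> 0 < mdet N -> inH z ->
  mob_act M (mob_act N z) = mob_act (mmul M N) z.
Proof.
  intros HM HN Hz.
  assert (H1 : 0 < Dm N z) by (apply Dm_pos; [lra|exact Hz]).
  assert (H3 : 0 < Dm (mmul M N) z) by (apply Dm_pos; [rewrite mdet_mul; nra| exact Hz]).
  rewrite (mob_act_eq M), (Dm_comp M N z) by lra.
  revert H1 H3. rewrite !mob_act_eq.
  destruct M as [a b c d]; destruct N as [a' b' c' d']; destruct z as [x y].
  unfold Dm, mdet, mmul; simpl. intros H1 H3.
  f_equal; field; split; lra.
Qed.

Lemma Qd_mob m z w : 0 < mdet m -> inH z -> inH w ->
  Qd (mob_act m z) (mob_act m w) = Qd z w.
Proof.
  intros Hm Hz Hw.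
  assert (H1 : 0 < Dm m z) by (apply Dm_pos; [lra|exact Hz]).
  assert (H2 : 0 < Dm m w) by (apply Dm_pos; [lra|exact Hw]).
  revert H1 H2 Hz Hw Hm. rewrite !mob_act_eq.
  destruct m as [a b c d]; destruct z as [x y]; destruct w as [x' y'].
  unfold Qd, Dm, mdet, inH; simpl. intros H1 H2 Hz Hw Hm.
  field. repeat split; lra.
Qed.

Lemma hdist_mob m z w : 0 < mdet m -> inH z -> inH w ->
  hdist (mob_act m z) (mob_act m w) = hdist z w.
Proof. intros. rewrite !hdist_Qd, Qd_mob; auto. Qed.

Lemma mdet_inv m : mdet (mob_inv m) = mdet m.
Proof. unfold mdet, mob_inv; simpl; ring. Qed.

Lemma mob_scal k z : k <> 0 -> inH z -> mob_act (Mob k 0 0 k) z = z.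
Proof.
  intros Hk Hz. destruct z as [x y]; unfold mob_act; simpl.
  f_equal; field; auto.
Qed.

Lemma mob_inv_l m z : 0 < mdet m -> inH z -> mob_act (mob_inv m) (mob_act m z) = z.
Proof.
  intros Hm Hz. rewrite mob_comp; auto; [|rewrite mdet_inv; auto].
  replace (mmul (mob_inv m) m) with (Mob (mdet m) 0 0 (mdet m)).
  - apply mob_scal; auto; lra.
  - destruct m; unfold mmul, mob_inv, mdet; simpl; f_equal; ring.
Qed.

Lemma mob_inv_r m z : 0 < mdet m -> inH z -> mob_act m (mob_act (mob_inv m) z) = z.
Proof.
  intros Hm Hz. rewrite mob_comp; auto; [|rewrite mdet_inv; auto].
  replace (mmul m (mob_inv m)) with (Mob (mdet m) 0 0 (mdet m)).
  - apply mob_scal; auto; lra.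
  - destruct m; unfold mmul, mob_inv, mdet; simpl; f_equal; ring.
Qed.

Definition W (e : R) : pt := ((1 - e ^ 2) / (1 + e ^ 2), 2 * e / (1 + e ^ 2)).

Lemma sq_zero (x : R) : x ^ 2 = 0 -> x = 0.
Proof. intro H. apply Rsqr_0_uniq. unfold Rsqr. simpl in H. lra. Qed.

Lemma W_solve (xz yz e : R) : 0 < e -> 0 < yz ->
  xz = yz * (/ e - e) / 2 ->
  1 + ((xz - 0) ^ 2 + (yz - 1) ^ 2) / (2 * yz * 1) = (/ e + e) / 2 ->
  (xz, yz) = W e.
Proof.
  intros He Hy Hx HQ. unfold W.
  assert (E1 : ((xz - 0) ^ 2 + (yz - 1) ^ 2) / (2 * yz * 1) * (2 * yz) = (xz - 0) ^ 2 + (yz - 1) ^ 2)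
    by (field; lra).
  assert (E2 : (xz - 0) ^ 2 + (yz - 1) ^ 2 = ((/ e + e) / 2 - 1) * (2 * yz)).
  { rewrite <- E1. f_equal. lra. }
  assert (Hi : / e * e = 1) by (field; lra).
  assert (H1 : (yz * (/ e + e) / 2 - 1) ^ 2 = 0).
  { transitivity (((xz - 0) ^ 2 + (yz - 1) ^ 2 - ((/ e + e) / 2 - 1) * (2 * yz)) + yz ^ 2 * (/ e * e - 1)).
    - rewrite Hx. field. lra.
    - rewrite E2, Hi. ring. }
  apply sq_zero in H1.
  assert (Hp : 0 < 1 + e^2) by (generalize (pow2_ge_0 e); lra).
  assert (Hy' : yz = 2 * e / (1 + e ^ 2)).
  { replace yz with (yz * (/ e + e) / 2 * (2 * e / (1 + e ^ 2))) by (field; lra).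
    replace (yz * (/ e + e) / 2) with 1 by lra. ring. }
  f_equal; auto. rewrite Hx, Hy'. field. lra.
Qed.

Lemma geod_pv c t0 : is_geodesic c -> c t0 = (0, 1) ->
  is_derive (fun r => fst (c r)) t0 1 -> is_derive (fun r => snd (c r)) t0 0 ->
  forall s, c (t0 + s) = W (exp (- s)).
Proof.
  intros Hg Hc HX HY s.
  assert (Hin : inH (c (t0 + s))) by (apply (proj1 Hg)).
  destruct (c (t0 + s)) as [xz yz] eqn:Ez. unfold inH in Hin; simpl in Hin.
  set (X := fun r => fst (c r)) in *. set (Y := fun r => snd (c r)) in *.
  set (F := fun r => 1 + ((xz - X r) ^ 2 + (yz - Y r) ^ 2) / (2 * yz * Y r)).
  assert (HF : forall r, F r = ch (t0 + s - r)).
  { intro r. rewrite <- (geod_Q c (t0 + s) r Hg), Ez. reflexivity. }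
  assert (HXt : X t0 = 0) by (unfold X; rewrite Hc; reflexivity).
  assert (HYt : Y t0 = 1) by (unfold Y; rewrite Hc; reflexivity).
  assert (D1 : is_derive F t0 (- xz / yz)).
  { unfold F. auto_derive.
    - repeat split; try (eexists; eauto). rewrite HYt. lra.
    - replace (Derive (fun x => X x) t0) with 1 by (symmetry; apply is_derive_unique; exact HX).
      replace (Derive (fun x => Y x) t0) with 0 by (symmetry; apply is_derive_unique; exact HY).
      rewrite HXt, HYt.
      field. lra. }
  assert (D2 : is_derive F t0 (- ((exp s - exp (- s)) / 2))).
  { apply (is_derive_ext (fun r => ch (t0 + s - r))). { intro; symmetry; apply HF. }
    unfold ch. auto_derive; auto.
    replace (t0 + s + - t0) with s by ring. lra. }
  assert (Exs : xz = yz * ((exp s - exp (- s)) / 2)).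
  { assert (E := eq_trans (eq_sym (is_derive_unique _ _ _ D1)) (is_derive_unique _ _ _ D2)).
    apply (f_equal (fun t => - t * yz)) in E. field_simplify in E; lra. }
  assert (HQ : Qd (c (t0 + s)) (c t0) = ch s).
  { rewrite geod_Q by auto. f_equal; ring. }
  rewrite Ez, Hc in HQ. unfold Qd, ch in HQ; cbn [fst snd] in HQ.
  apply W_solve; auto.
  - apply exp_pos.
  - rewrite Exs, exp_neg_inv, Rinv_inv. field. apply Rgt_not_eq, exp_pos.
  - rewrite HQ, exp_neg_inv, Rinv_inv. rewrite <- exp_neg_inv. lra.
Qed.

Lemma ch_mono x y : 0 <= x -> x <= y -> ch x <= ch y.
Proof.
  intros Hx Hxy. unfold ch. rewrite !exp_neg_inv.
  assert (Ex := exp_ge1 x Hx).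
  assert (Exy : exp x <= exp y).
  { destruct (Req_dec x y). subst; lra. left; apply exp_increasing; lra. }
  assert (0 < exp x) by apply exp_pos.
  assert (exp y + / exp y - (exp x + / exp x) = (exp y - exp x) * (exp x * exp y - 1) / (exp x * exp y))
    by (field; split; apply Rgt_not_eq, exp_pos).
  assert (0 <= (exp y - exp x) * (exp x * exp y - 1) / (exp x * exp y)).
  { apply Rdiv_le_0_compat; [|apply Rmult_lt_0_compat; apply exp_pos].
    apply Rmult_le_pos; nra. }
  lra.
Qed.

Lemma Qd_le_of_hdist z w M : inH z -> inH w -> hdist z w <= M -> Qd z w <= ch M.
Proof.
  intros Hz Hw H. rewrite <- ch_hdist by auto. apply ch_mono; auto. apply hdist_ge0; auto.
Qed.

Lemma bound_to_zero (D G T0 : R) :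
  (forall T, T0 <= T -> Rabs D <= G * exp (- T)) -> D = 0.
Proof.
  intro H. destruct (Req_dec D 0) as [|HD]; auto. exfalso.
  assert (HA : 0 < Rabs D) by (apply Rabs_pos_lt; auto).
  assert (HG : 0 < G).
  { specialize (H T0 (Rle_refl _)). assert (0 < exp (- T0)) by apply exp_pos.
    destruct (Rle_or_lt G 0); auto. nra. }
  set (T := Rmax T0 (G / Rabs D)).
  specialize (H T (Rmax_l _ _)).
  assert (H1 : G / Rabs D <= T) by apply Rmax_r.
  assert (H2 := exp_ineq1_le T).
  rewrite exp_neg_inv in H.
  assert (0 < exp T) by apply exp_pos.
  assert (G < Rabs D * exp T).
  { assert (G = Rabs D * (G / Rabs D)) by (field; lra). nra. }
  assert (Rabs D * exp T <= G).
  { apply Rmult_le_reg_r with (/ exp T). apply Rinv_0_lt_compat; auto.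
    rewrite Rmult_assoc, Rinv_r by lra. lra. }
  lra.
Qed.

Lemma abs_le_of_sq u r : 0 <= r -> u ^ 2 <= r ^ 2 -> Rabs u <= r.
Proof.
  intros Hr H. rewrite <- (Rabs_pos_eq r Hr). apply Rsqr_le_abs_0. unfold Rsqr. simpl in H. lra.
Qed.

Lemma est_core (xz yz a b al be K X Y T s : R) :
  0 < be -> 1 <= K -> 0 < Y -> 0 <= T ->
  2 * Y * yz * ch (T - s) = 2 * Y * yz + (X - xz) ^ 2 + (Y - yz) ^ 2 ->
  2 * Y * b * ch T = 2 * Y * b + (X - a) ^ 2 + (Y - b) ^ 2 ->
  (X - al) ^ 2 + (Y - be * exp T) ^ 2 <= 2 * (K - 1) * Y * (be * exp T) ->
  Rabs (yz * exp (- s) - b) <=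
   (Rabs (yz * exp s - b) + 2 * K * (2 * Rabs al * Rabs (xz - a) + Rabs (xz ^ 2 + yz ^ 2 - a ^ 2 - b ^ 2)) / be
    + 8 * K ^ 2 * Rabs (xz - a)) * exp (- T).
Proof.
  intros Hbe HK HY HT H1 H2 H3.
  assert (He1 := exp_ge1 T HT).
  set (e := exp T) in *.
  assert (Hch1 : ch (T - s) = (e * exp (- s) + exp s / e) / 2).
  { unfold ch, e. unfold Rminus. rewrite exp_plus, Ropp_plus_distr, Ropp_involutive, exp_plus, exp_neg_inv.
    rewrite exp_neg_inv. field; repeat split; apply Rgt_not_eq, exp_pos. }
  assert (Hch2 : ch T = (e + / e) / 2) by (unfold ch, e; rewrite exp_neg_inv; reflexivity).
  set (Dl := yz * exp (- s) - b). set (Dp := yz * exp s - b).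
  set (C := xz ^ 2 + yz ^ 2 - a ^ 2 - b ^ 2).
  assert (E1 : Y * (e * Dl + Dp / e) = - 2 * X * (xz - a) + C).
  { transitivity (2 * Y * yz * ch (T - s) - 2 * Y * b * ch T).
    - rewrite Hch1, Hch2. unfold Dl, Dp. field. lra.
    - rewrite H1, H2. unfold C. ring. }
  set (Q := be * e) in *.
  assert (HQ : 0 < Q) by (unfold Q; nra).
  assert (HX2 : 0 <= (X - al) ^ 2) by apply pow2_ge_0.
  assert (HYl : Q / (2 * K) <= Y).
  { apply Rmult_le_reg_r with (2 * K); [lra|].
    unfold Rdiv. rewrite Rmult_assoc, Rinv_l, Rmult_1_r by lra. nra. }
  assert (HYu : Y <= 2 * K * Q) by nra.
  assert (HXa : Rabs (X - al) <= 2 * K * Q).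
  { apply abs_le_of_sq; [nra|]. nra. }
  assert (HXb : Rabs X <= Rabs al + 2 * K * Q).
  { replace X with ((X - al) + al) by ring. eapply Rle_trans; [apply Rabs_triang|]. lra. }
  set (r := Rabs (xz - a)). assert (Hr : 0 <= r) by apply Rabs_pos.
  set (cc := Rabs C). assert (Hc : 0 <= cc) by apply Rabs_pos.
  set (dp := Rabs Dp). assert (Hdp : 0 <= dp) by apply Rabs_pos.
  assert (Hal : 0 <= Rabs al) by apply Rabs_pos.
  assert (HXp : 0 <= Rabs X) by apply Rabs_pos.
  assert (E2 : Y * e * Rabs Dl <= Y * dp / e + 2 * Rabs X * r + cc).
  { replace (Y * e * Rabs Dl) with (Rabs (Y * e * Dl))
      by (rewrite !Rabs_mult, (Rabs_pos_eq Y), (Rabs_pos_eq e); lra).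
    replace (Y * e * Dl) with (- (Y * (Dp / e)) + (- 2 * X * (xz - a) + C)) by (rewrite <- E1; field; lra).
    eapply Rle_trans; [apply Rabs_triang|].
    eapply Rle_trans; [apply Rplus_le_compat; [apply Req_le; apply Rabs_Ropp|apply Rabs_triang]|].
    rewrite Rabs_mult, (Rabs_pos_eq Y), Rabs_div, (Rabs_pos_eq e) by lra.
    replace (- 2 * X * (xz - a)) with (- (2 * (X * (xz - a)))) by ring.
    rewrite Rabs_Ropp, Rabs_mult, Rabs_mult, (Rabs_pos_eq 2) by lra.
    fold r dp cc. unfold Rdiv. lra. }
  set (G := dp + 2 * K * (2 * Rabs al * r + cc) / be + 8 * K ^ 2 * r).
  assert (Hs1 : Y * dp / e <= Y * dp).
  { assert (Hi : / e <= 1) by (rewrite <- Rinv_1; apply Rinv_le_contravar; lra).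
    assert (0 <= Y * dp) by (apply Rmult_le_pos; lra).
    unfold Rdiv. rewrite <- (Rmult_1_r (Y * dp)) at 2. apply Rmult_le_compat_l; auto. }
  assert (HYb : 1 <= Y * (2 * K) / be).
  { assert (Ee : Y * (2 * K) / be - e = (Y - Q / (2 * K)) * (2 * K / be)) by (unfold Q; field; lra).
    assert (0 <= 2 * K / be) by (apply Rdiv_le_0_compat; lra).
    assert (0 <= (Y - Q / (2 * K)) * (2 * K / be)) by (apply Rmult_le_pos; lra). lra. }
  assert (Hs2 : 2 * Rabs al * r + cc <= Y * (2 * K * (2 * Rabs al * r + cc) / be)).
  { replace (Y * (2 * K * (2 * Rabs al * r + cc) / be)) with ((Y * (2 * K) / be) * (2 * Rabs al * r + cc))
      by (field; lra).
    assert (0 <= 2 * Rabs al * r + cc) by (assert (0 <= Rabs al * r) by (apply Rmult_le_pos; lra); lra).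
    rewrite <- (Rmult_1_l (2 * Rabs al * r + cc)) at 1. apply Rmult_le_compat_r; lra. }
  assert (Hs3 : 4 * K * Q * r <= Y * (8 * K ^ 2 * r)).
  { assert (HQK : Q <= 2 * K * Y).
    { assert (Ee : 2 * K * Y - Q = 2 * K * (Y - Q / (2 * K))) by (field; lra).
      assert (0 <= 2 * K * (Y - Q / (2 * K))) by (apply Rmult_le_pos; lra). lra. }
    assert (0 <= 4 * K * r * (2 * K * Y - Q)) by (apply Rmult_le_pos; [apply Rmult_le_pos|]; lra).
    simpl. lra. }
  assert (Hfin : Y * e * Rabs Dl <= Y * G).
  { unfold G. assert (2 * Rabs X * r <= 2 * Rabs al * r + 4 * K * Q * r).
    { assert (0 <= (Rabs al + 2 * K * Q - Rabs X) * r) by (apply Rmult_le_pos; lra). lra. }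
    assert (HYG : Y * G = Y * dp + Y * (2 * K * (2 * Rabs al * r + cc) / be) + Y * (8 * K ^ 2 * r))
      by (unfold G; ring).
    unfold G in HYG. lra. }
  assert (HDl : Rabs Dl <= G / e).
  { apply Rmult_le_reg_r with (Y * e); [apply Rmult_lt_0_compat; lra|].
    replace (G / e * (Y * e)) with (Y * G) by (field; lra). lra. }
  rewrite (exp_neg_inv T). fold e. unfold G, Rdiv in HDl. exact HDl.
Qed.

Lemma Qd_mul z w : inH z -> inH w ->
  2 * snd z * snd w * Qd z w = 2 * snd z * snd w + (fst z - fst w) ^ 2 + (snd z - snd w) ^ 2.
Proof. unfold inH, Qd; intros; field; lra. Qed.

Lemma vert_ident w a b al be M : is_geodesic w -> w 0 = (a, b) -> 0 < be ->
  (forall t, 0 <= t -> hdist (w t) (al, be * exp t) <= M) ->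
  forall s, w s = (a, b * exp s).
Proof.
  intros Hg H0 Hbe HM s.
  assert (Hb : 0 < b) by (generalize (proj1 Hg 0); rewrite H0; unfold inH; simpl; auto).
  assert (Hz : inH (w s)) by apply (proj1 Hg).
  destruct (w s) as [xz yz] eqn:Ez. unfold inH in Hz; simpl in Hz.
  assert (HK : 1 <= ch M) by apply ch_ge1.
  assert (HD : yz * exp (- s) - b = 0).
  { eapply (bound_to_zero _ _ (Rmax 0 s)). intros T HT.
    assert (HT0 : 0 <= T) by (eapply Rle_trans; [apply Rmax_l|exact HT]).
    assert (HTs : s <= T) by (eapply Rle_trans; [apply Rmax_r|exact HT]).
    assert (HwT : inH (w T)) by apply (proj1 Hg).
    destruct (w T) as [X Y] eqn:EwT. unfold inH in HwT; simpl in HwT.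
    assert (Q1 := geod_Q w T s Hg). rewrite EwT, Ez in Q1.
    assert (Q2 := geod_Q w T 0 Hg). rewrite EwT, H0 in Q2. replace (T - 0) with T in Q2 by ring.
    assert (HQ3 : inH (al, be * exp T)) by (unfold inH; simpl; apply Rmult_lt_0_compat; auto; apply exp_pos).
    assert (Q3 := Qd_le_of_hdist _ _ _ (proj1 Hg T) HQ3 (HM T HT0)). rewrite EwT in Q3.
    apply (est_core xz yz a b al be (ch M) X Y T s); auto.
    - rewrite <- Q1. assert (Hm := Qd_mul (X, Y) (xz, yz) HwT Hz). cbn [fst snd] in Hm. exact Hm.
    - rewrite <- Q2. assert (Hm := Qd_mul (X, Y) (a, b) HwT Hb). cbn [fst snd] in Hm. exact Hm.
    - assert (Hm := Qd_mul (X, Y) (al, be * exp T) HwT HQ3). cbn [fst snd] in Hm.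
      assert (HQp : 0 < be * exp T) by (apply Rmult_lt_0_compat; auto; apply exp_pos).
      assert (HYQ : 0 < 2 * Y * (be * exp T)) by (apply Rmult_lt_0_compat; lra).
      assert (2 * Y * (be * exp T) * Qd (X, Y) (al, be * exp T) <= 2 * Y * (be * exp T) * ch M)
        by (apply Rmult_le_compat_l; lra).
      lra. }
  assert (Hy : yz = b * exp s).
  { rewrite exp_neg_inv in HD. assert (0 < exp s) by apply exp_pos.
    apply (f_equal (fun t => t * exp s)) in HD. field_simplify in HD; lra. }
  assert (Q := geod_Q w s 0 Hg). rewrite Ez, H0 in Q. replace (s - 0) with s in Q by ring.
  assert (Hm := Qd_mul (xz, yz) (a, b) Hz Hb). cbn [fst snd] in Hm. rewrite Q in Hm.
  assert (Hx : (xz - a) ^ 2 = 0).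
  { rewrite Hy in Hm. unfold ch in Hm. rewrite exp_neg_inv in Hm.
    assert (0 < exp s) by apply exp_pos.
    assert (E : (xz - a) ^ 2 = 2 * (b * exp s) * b * ((exp s + / exp s) / 2) - 2 * (b * exp s) * b - (b * exp s - b) ^ 2) by lra.
    rewrite E. field. lra. }
  apply sq_zero in Hx. f_equal; lra.
Qed.

Lemma lim_exp_shift t0 : is_lim (fun t => exp (- (t - t0))) p_infty 0.
Proof.
  apply (is_lim_ext (fun t => exp (-1 * t + t0))). { intro; f_equal; ring. }
  apply (is_lim_comp_lin (fun y => exp y) (-1) t0 p_infty 0).
  - replace (Rbar_plus (Rbar_mult (-1) p_infty) t0) with m_infty. apply is_lim_exp_m.
    simpl. destruct (Rle_dec 0 (-1)) as [H|H]; [exfalso; lra|]. reflexivity.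
  - lra.
Qed.

Definition hP (P : pt) (e : R) : R :=
  snd (W e) + ((fst P - fst (W e)) ^ 2 + (snd P - snd (W e)) ^ 2) / (2 * snd P).
Definition gP (P : pt) (e : R) : R := hP P e + sqrt (hP P e ^ 2 - snd (W e) ^ 2).

Lemma W_snd_pos e : 0 < e -> 0 < snd (W e).
Proof.
  intro. unfold W; simpl. apply Rdiv_lt_0_compat; [lra|]. generalize (pow2_ge_0 e); lra.
Qed.

Lemma hP_pos P e : inH P -> 0 <= e -> 0 < hP P e.
Proof.
  unfold inH, hP; intros HP He. unfold W; cbn [fst snd].
  assert (H1 : 0 < 1 + e ^ 2) by (generalize (pow2_ge_0 e); lra).
  assert (0 <= 2 * e / (1 + e ^ 2)) by (apply Rdiv_le_0_compat; lra).
  destruct (Req_dec e 0).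
  - subst. assert (0 < ((fst P - (1 - 0 ^ 2) / (1 + 0 ^ 2)) ^ 2 + (snd P - 2 * 0 / (1 + 0 ^ 2)) ^ 2) / (2 * snd P)); [|lra].
    apply Rdiv_lt_0_compat; [|lra]. replace (snd P - 2 * 0 / (1 + 0 ^ 2)) with (snd P) by (field; lra).
    assert (0 < snd P ^ 2) by (apply pow_lt; auto). assert (0 <= (fst P - (1 - 0 ^ 2) / (1 + 0 ^ 2)) ^ 2) by apply pow2_ge_0. lra.
  - assert (0 < 2 * e / (1 + e ^ 2)) by (apply Rdiv_lt_0_compat; lra).
    assert (0 <= ((fst P - (1 - e ^ 2) / (1 + e ^ 2)) ^ 2 + (snd P - 2 * e / (1 + e ^ 2)) ^ 2) / (2 * snd P)); [|lra].
    apply Rdiv_le_0_compat; [|lra]. apply Rplus_le_le_0_compat; apply pow2_ge_0.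
Qed.

Lemma hdist_W P e : inH P -> 0 < e -> hdist P (W e) = ln (gP P e) - ln (snd (W e)).
Proof.
  intros HP He. assert (Hy := W_snd_pos e He). assert (Hh := hP_pos P e HP (Rlt_le _ _ He)).
  assert (HQ : Qd P (W e) = hP P e / snd (W e)).
  { unfold Qd, hP. unfold inH in HP. field. lra. }
  assert (HQ1 : 1 <= Qd P (W e)) by (apply Qd_ge1; auto).
  rewrite hdist_Qd. unfold arcosh. rewrite HQ in *.
  set (h := hP P e) in *. set (y := snd (W e)) in *.
  assert (Hhy : y <= h).
  { apply Rmult_le_reg_r with (/ y). apply Rinv_0_lt_compat; auto.
    rewrite Rinv_r by lra. exact HQ1. }
  assert (E : sqrt ((h / y) ^ 2 - 1) = sqrt (h ^ 2 - y ^ 2) / y).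
  { replace ((h / y) ^ 2 - 1) with ((h ^ 2 - y ^ 2) / y ^ 2) by (field; lra).
    rewrite sqrt_div_alt by (apply pow_lt; auto). rewrite sqrt_pow2 by lra. reflexivity. }
  rewrite E. unfold gP. fold h. fold y.
  replace (h / y + sqrt (h ^ 2 - y ^ 2) / y) with ((h + sqrt (h ^ 2 - y ^ 2)) / y) by (field; lra).
  rewrite ln_div; auto.
  assert (0 <= sqrt (h ^ 2 - y ^ 2)) by apply sqrt_pos. lra.
Qed.

Definition Phi (A B : pt) (e : R) := ln (gP A e) - ln (gP B e).

Lemma gP_pos0 P : inH P -> 0 < gP P 0.
Proof.
  intro HP. unfold gP. assert (H := hP_pos P 0 HP (Rle_refl _)).
  assert (0 <= sqrt (hP P 0 ^ 2 - snd (W 0) ^ 2)) by apply sqrt_pos. lra.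
Qed.

Lemma hP_ex P : inH P -> ex_derive (hP P) 0.
Proof.
  intro HP. unfold inH in HP. unfold hP, W; cbn [fst snd]. auto_derive.
  repeat split; try lra; simpl; lra.
Qed.

Definition Wy (e : R) := snd (W e).
Lemma Wy_ex : ex_derive Wy 0.
Proof. unfold Wy, W; cbn [fst snd]. auto_derive. simpl; lra. Qed.

Lemma Phi_cont A B : inH A -> inH B -> continuous (Phi A B) 0.
Proof.
  intros HA HB. apply (@ex_derive_continuous R_AbsRing R_NormedModule).
  assert (HWy : snd (W 0) = 0) by (unfold W; simpl; field).
  assert (HhA := hP_pos A 0 HA (Rle_refl _)). assert (HhB := hP_pos B 0 HB (Rle_refl _)).
  assert (HgA := gP_pos0 A HA). assert (HgB := gP_pos0 B HB).
  assert (DA := hP_ex A HA). assert (DB := hP_ex B HB). assert (DW := Wy_ex).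
  unfold Phi, gP in *. fold (Wy 0) in *. change (fun e => snd (W e)) with Wy.
  apply (ex_derive_ext (fun e => ln (hP A e + sqrt (hP A e ^ 2 - Wy e ^ 2)) - ln (hP B e + sqrt (hP B e ^ 2 - Wy e ^ 2)))).
  { intro; reflexivity. }
  auto_derive.
  repeat split; auto; rewrite HWy in *; try lra; nra.
Qed.

Lemma busemann_W c t0 A B : inH A -> inH B ->
  (forall t, c t = W (exp (- (t - t0)))) ->
  busemann c A B = Phi A B 0.
Proof.
  intros HA HB Hc. unfold busemann.
  rewrite (is_lim_unique _ _ (Phi A B 0)); [reflexivity|].
  apply (is_lim_ext (fun t => Phi A B (exp (- (t - t0))))).
  { intro t. rewrite Hc. assert (He := exp_pos (- (t - t0))).
    rewrite !hdist_W by auto. unfold Phi. ring. }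
  unfold is_lim. eapply filterlim_comp.
  - apply (lim_exp_shift t0).
  - apply Phi_cont; auto.
Qed.

Lemma Phi0 A B : inH A -> inH B ->
  Phi A B 0 = ln (((fst A - 1) ^ 2 + snd A ^ 2) / snd A) - ln (((fst B - 1) ^ 2 + snd B ^ 2) / snd B).
Proof.
  intros HA HB. unfold Phi.
  assert (Hg : forall P, inH P -> gP P 0 = ((fst P - 1) ^ 2 + snd P ^ 2) / snd P).
  { intros P HP. assert (Hh := hP_pos P 0 HP (Rle_refl _)). unfold gP.
    assert (HWy : snd (W 0) = 0) by (unfold W; simpl; field).
    rewrite HWy. replace (hP P 0 ^ 2 - 0 ^ 2) with (hP P 0 ^ 2) by ring.
    rewrite sqrt_pow2 by lra. unfold hP. rewrite HWy. unfold W; cbn [fst snd].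
    unfold inH in HP. field. lra. }
  rewrite !Hg; auto.
Qed.

Lemma vert_tri (a h lam : R) (P : pt) : 0 < h -> 1 <= lam -> inH P ->
  hdist (a, lam * h) P <= hdist (a, h) P + ln lam.
Proof.
  intros Hh Hl HP. destruct P as [x y]. unfold inH in HP; simpl in HP.
  assert (HQ1 : 1 <= Qd (a, h) (x, y)) by (apply Qd_ge1; unfold inH; simpl; lra).
  set (q := Qd (a, h) (x, y)) in *.
  assert (Hs0 : 0 <= q ^ 2 - 1) by nra.
  assert (Hss := sqrt_sqrt _ Hs0). assert (Hsp := sqrt_pos (q ^ 2 - 1)).
  set (s := sqrt (q ^ 2 - 1)) in *.
  assert (Hd : hdist (a, h) (x, y) = ln (q + s)) by reflexivity.
  assert (Hlp : 0 < lam) by lra.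
  assert (Hln : 0 <= ln lam) by (rewrite <- ln_1; apply ln_le; lra).
  apply hdist_le_ch; unfold inH; simpl; try nra.
  - rewrite Hd. assert (0 <= ln (q + s)) by (rewrite <- ln_1; apply ln_le; lra). lra.
  - rewrite Hd. unfold ch. rewrite <- ln_mult by lra. rewrite exp_neg_inv, exp_ln by nra.
    assert (Hq : q = (((x - a) ^ 2 + y ^ 2) + h ^ 2) / (2 * h * y)) by (unfold q, Qd; simpl; field; lra).
    set (t := h / y).
    assert (Ht : (t - q) ^ 2 <= s ^ 2).
    { replace (s ^ 2) with (q ^ 2 - 1) by (simpl; lra).
      assert (E : (t - q) ^ 2 - (q ^ 2 - 1) = - ((x - a) ^ 2 / y ^ 2)).
      { unfold t. rewrite Hq. field. lra. }
      assert (0 <= (x - a) ^ 2 / y ^ 2) by (apply Rdiv_le_0_compat; [apply pow2_ge_0|nra]).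
      lra. }
    assert (Hts : t <= q + s).
    { destruct (Rle_or_lt t q). lra.
      assert (Hr : Rsqr (t - q) <= Rsqr s) by (unfold Rsqr; simpl in Ht; lra).
      apply Rsqr_le_abs_0 in Hr. rewrite !Rabs_right in Hr by lra. lra. }
    unfold Qd; cbn [fst snd].
    assert (E2 : 1 + ((a - x) ^ 2 + (lam * h - y) ^ 2) / (2 * (lam * h) * y) = q / lam + (lam - / lam) * t / 2).
    { rewrite Hq. unfold t. field. lra. }
    rewrite E2.
    assert (Einv : / ((q + s) * lam) = (q - s) / lam).
    { assert (Hqs : (q + s) * (q - s) = 1) by (simpl in Hss; nra).
      field_simplify_eq; try lra. }
    rewrite Einv.
    assert (Hlam : 0 <= lam - / lam).
    { assert (/ lam <= 1) by (rewrite <- Rinv_1; apply Rinv_le_contravar; lra). lra. }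
    assert ((lam - / lam) * t <= (lam - / lam) * (q + s)) by (apply Rmult_le_compat_l; lra).
    assert (E3 : ((q + s) * lam + (q - s) / lam) / 2 = q / lam + (lam - / lam) * (q + s) / 2) by (field; lra).
    rewrite E3. lra.
Qed.

Definition P0 (l : R) (z : pt) : pt := (fst z + l, snd z).
Definition Nn (e0 l : R) := 4 * e0 ^ 2 * (1 + l) + l ^ 2 * (1 + e0 ^ 2).
Definition Jm (l : R) := Mob 0 (-1) 1 (- (1 + l)).
Definition aJ (e0 l : R) := (2 * e0 ^ 2 + l * (1 + e0 ^ 2)) / Nn e0 l.
Definition bJ (e0 l : R) := 2 * e0 / Nn e0 l.

Lemma Nn_pos e0 l : 0 < e0 -> 0 < l -> 0 < Nn e0 l.
Proof. intros. unfold Nn. assert (0 < e0^2) by (apply pow_lt; auto). nra. Qed.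

Lemma Jm_det l : mdet (Jm l) = 1.
Proof. unfold mdet, Jm; simpl; ring. Qed.

Lemma J_W0 e0 l : 0 < e0 -> 0 < l -> mob_act (Jm l) (W e0) = (aJ e0 l, bJ e0 l).
Proof.
  intros H0 Hl. assert (HN := Nn_pos e0 l H0 Hl). unfold Nn in HN.
  assert (0 < 1 + e0 ^ 2) by (generalize (pow2_ge_0 e0); lra).
  unfold mob_act, Jm, W, aJ, bJ, Nn; cbn [fst snd ma mb mc md].
  assert (HD : (1 * ((1 - e0 ^ 2) / (1 + e0 ^ 2)) + - (1 + l)) ^ 2 + (1 * (2 * e0 / (1 + e0 ^ 2))) ^ 2
     = Nn e0 l / (1 + e0 ^ 2)) by (unfold Nn; field; lra).
  unfold Nn in HD. rewrite HD.
  f_equal; field; lra.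
Qed.

Lemma J_P0W e l : 0 < e -> 0 < l -> mob_act (Jm l) (P0 l (W e)) = (1 / 2, / (2 * e)).
Proof.
  intros H0 Hl.
  assert (0 < 1 + e ^ 2) by (generalize (pow2_ge_0 e); lra).
  unfold mob_act, Jm, W, P0; cbn [fst snd ma mb mc md].
  assert (HD : (1 * ((1 - e ^ 2) / (1 + e ^ 2) + l) + - (1 + l)) ^ 2 + (1 * (2 * e / (1 + e ^ 2))) ^ 2
     = 4 * e ^ 2 / (1 + e ^ 2)) by (field; lra).
  rewrite HD. assert (0 < e ^ 2) by (apply pow_lt; auto).
  f_equal; field; lra.
Qed.

Lemma tau_val e0 l : 1 <= e0 -> 0 < l ->
  Phi (P0 (- l) (W e0)) (W e0) 0 = ln (Nn e0 l / (4 * e0 ^ 2)).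
Proof.
  intros H0 Hl. assert (0 < 1 + e0 ^ 2) by (generalize (pow2_ge_0 e0); lra).
  assert (He : 0 < e0 ^ 2) by (apply pow_lt; lra).
  assert (Hy : 0 < 2 * e0 / (1 + e0 ^ 2)) by (apply Rdiv_lt_0_compat; lra).
  rewrite Phi0 by (unfold inH, P0, W; simpl; auto).
  unfold P0, W; cbn [fst snd].
  rewrite <- ln_div.
  - f_equal. unfold Nn. field. repeat split; try lra. assert (0 < (2 * e0) ^ 2) by (apply pow_lt; lra). generalize (pow2_ge_0 (1 - e0 ^ 2 - (1 + e0 ^ 2))). lra.
  - apply Rdiv_lt_0_compat; auto. assert (0 < (2 * e0 / (1 + e0 ^ 2)) ^ 2) by (apply pow_lt; auto).
    generalize (pow2_ge_0 ((1 - e0 ^ 2) / (1 + e0 ^ 2) + - l - 1)). lra.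
  - apply Rdiv_lt_0_compat; auto. assert (0 < (2 * e0 / (1 + e0 ^ 2)) ^ 2) by (apply pow_lt; auto).
    generalize (pow2_ge_0 ((1 - e0 ^ 2) / (1 + e0 ^ 2) - 1)). lra.
Qed.

Lemma I4id e0 E l : 0 < e0 -> 0 < E -> 0 < l ->
  (aJ e0 l - aJ (e0 / E) l) ^ 2 + (bJ e0 l * E - bJ (e0 / E) l) ^ 2 =
  2 * (bJ e0 l * E) * bJ (e0 / E) l * (2 * l ^ 2 / Nn e0 l) * ((E - / E) / 2) ^ 2.
Proof.
  intros H0 H1 Hl. assert (HN := Nn_pos e0 l H0 Hl).
  assert (He : 0 < e0 / E) by (apply Rdiv_lt_0_compat; auto).
  assert (HN' := Nn_pos (e0 / E) l He Hl).
  unfold aJ, bJ. unfold Nn in *. field. repeat split; try lra. assert (0 < e0^2) by (apply pow_lt; lra). assert (0 < E^2) by (apply pow_lt; lra). assert (0 < l^2) by (apply pow_lt; lra). nra.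
Qed.

Lemma u_bound e0 E l : 1 <= e0 -> 1 <= E -> E <= 3 * e0 -> 0 < l ->
  hdist (aJ e0 l, bJ e0 l * E) (mob_act (Jm l) (W (e0 / E))) <= 3 * l.
Proof.
  intros H0 H1 H3 Hl.
  assert (He : 0 < e0 / E) by (apply Rdiv_lt_0_compat; lra).
  assert (HN := Nn_pos e0 l ltac:(lra) Hl). assert (HN' := Nn_pos (e0 / E) l He Hl).
  assert (Hb : 0 < bJ e0 l) by (unfold bJ; apply Rdiv_lt_0_compat; lra).
  assert (Hb' : 0 < bJ (e0 / E) l) by (unfold bJ; apply Rdiv_lt_0_compat; lra).
  rewrite J_W0 by auto.
  apply hdist_bound; unfold inH; cbn [fst snd]; try nra.
  rewrite I4id by lra.
  set (K := 2 * l ^ 2 / Nn e0 l).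
  assert (HK : K <= l ^ 2 / (2 * e0 ^ 2)).
  { unfold K. assert (0 < e0 ^ 2) by (apply pow_lt; lra).
    assert (4 * e0 ^ 2 <= Nn e0 l) by (unfold Nn; assert (0 <= l^2 * (1 + e0^2)) by (apply Rmult_le_pos; nra); nra).
    unfold Rdiv. apply Rmult_le_reg_r with (Nn e0 l * (2 * e0 ^ 2)). nra.
    replace (2 * l ^ 2 * / Nn e0 l * (Nn e0 l * (2 * e0 ^ 2))) with (4 * l ^ 2 * e0 ^ 2) by (field; lra).
    replace (l ^ 2 * / (2 * e0 ^ 2) * (Nn e0 l * (2 * e0 ^ 2))) with (l ^ 2 * Nn e0 l) by (field; lra).
    assert (0 <= l ^ 2) by apply pow2_ge_0. nra. }
  assert (HS : ((E - / E) / 2) ^ 2 <= E ^ 2 / 4).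
  { assert (0 < / E <= 1) by (split; [apply Rinv_0_lt_compat; lra| rewrite <- Rinv_1; apply Rinv_le_contravar; lra]).
    assert (0 <= E - / E <= E) by lra. nra. }
  assert (HKp : 0 <= K) by (unfold K; apply Rdiv_le_0_compat; nra).
  assert (HE2 : E ^ 2 <= 9 * e0 ^ 2) by nra.
  assert (HKS : 2 * K * ((E - / E) / 2) ^ 2 <= (3 * l) ^ 2 / 4).
  { assert (0 <= ((E - / E) / 2) ^ 2) by apply pow2_ge_0.
    assert (2 * K * ((E - / E) / 2) ^ 2 <= 2 * (l ^ 2 / (2 * e0 ^ 2)) * (E ^ 2 / 4)) by nra.
    assert (H6 : l ^ 2 / (2 * e0 ^ 2) * E ^ 2 <= l ^ 2 / (2 * e0 ^ 2) * (9 * e0 ^ 2)).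
    { apply Rmult_le_compat_l; auto. apply Rdiv_le_0_compat; [apply pow2_ge_0|]. assert (0 < e0^2) by (apply pow_lt; lra). lra. }
    replace (l ^ 2 / (2 * e0 ^ 2) * (9 * e0 ^ 2)) with (9 * l ^ 2 / 2) in H6 by (field; lra).
    nra. }
  assert (Hbb : 0 < bJ e0 l * E * bJ (e0 / E) l) by (apply Rmult_lt_0_compat; nra).
  assert (E5 : 2 * (bJ e0 l * E) * bJ (e0 / E) l * K * ((E - / E) / 2) ^ 2
      = (bJ e0 l * E * bJ (e0 / E) l) * (2 * K * ((E - / E) / 2) ^ 2)) by ring.
  rewrite E5.
  replace (bJ e0 l * E * bJ (e0 / E) l * (3 * l) ^ 2 / 4) with ((bJ e0 l * E * bJ (e0 / E) l) * ((3 * l) ^ 2 / 4)) by (field).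
  apply Rmult_le_compat_l; lra.
Qed.

Lemma pu_bound e0 E l : 1 <= e0 -> e0 <= E -> 0 < l ->
  hdist (aJ e0 l, / (2 * e0) * E) (1 / 2, / (2 * e0) * E) <= 2 * l.
Proof.
  intros H0 H1 Hl.
  assert (HN := Nn_pos e0 l ltac:(lra) Hl).
  assert (He2 : 1 <= e0 ^ 2) by nra.
  assert (HH : 1 / 2 <= / (2 * e0) * E).
  { replace (/ (2 * e0) * E) with (E / (2 * e0)) by (field; lra).
    apply Rmult_le_reg_r with (2 * e0); [lra|]. field_simplify; lra. }
  assert (Ea : 1 / 2 - aJ e0 l = (2 * l * (e0 ^ 2 - 1) + l ^ 2 * (1 + e0 ^ 2)) / (2 * Nn e0 l)).
  { unfold aJ, Nn in *. field. lra. }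
  assert (Hn : 0 <= 2 * l * (e0 ^ 2 - 1) + l ^ 2 * (1 + e0 ^ 2)) by nra.
  assert (Hu : 2 * l * (e0 ^ 2 - 1) + l ^ 2 * (1 + e0 ^ 2) <= l * Nn e0 l) by (unfold Nn; nra).
  assert (Hd1 : 0 <= 1 / 2 - aJ e0 l) by (rewrite Ea; apply Rdiv_le_0_compat; lra).
  assert (Hd2 : 1 / 2 - aJ e0 l <= l / 2).
  { rewrite Ea. apply Rmult_le_reg_r with (2 * Nn e0 l); [lra|].
    replace ((2 * l * (e0 ^ 2 - 1) + l ^ 2 * (1 + e0 ^ 2)) / (2 * Nn e0 l) * (2 * Nn e0 l))
      with (2 * l * (e0 ^ 2 - 1) + l ^ 2 * (1 + e0 ^ 2)) by (field; lra). lra. }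
  apply hdist_bound; unfold inH; cbn [fst snd]; try lra.
  set (H := / (2 * e0) * E) in *. clearbody H.
  assert ((aJ e0 l - 1 / 2) ^ 2 <= (l / 2) ^ 2) by nra.
  assert ((l / 2) ^ 2 <= H * H * (2 * l) ^ 2 / 4). { assert (HH2 : 1/4 <= H * H) by nra. assert (0 <= l ^ 2) by apply pow2_ge_0. replace (H * H * (2 * l) ^ 2 / 4) with ((H * H) * l ^ 2) by field. replace ((l / 2) ^ 2) with (1/4 * l ^ 2) by field. apply Rmult_le_compat_r; lra. }
  replace ((H - H) ^ 2) with 0 by ring. lra.
Qed.

Lemma exp_mono x y : x <= y -> exp x <= exp y.
Proof. intro H. destruct (Req_dec x y). subst; lra. left; apply exp_increasing; lra. Qed.

Theorem core (l t0 : R) (u v : R -> pt) :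
  0 < l -> 0 <= t0 -> is_geodesic u -> u t0 = (0, 1) ->
  is_derive (fun r => fst (u r)) t0 1 -> is_derive (fun r => snd (u r)) t0 0 ->
  is_geodesic v -> v 0 = u 0 -> same_fwd_endpoint v (fun t => P0 l (u t)) ->
  forall t, 0 <= t ->
  Rmin (dist_d1 (gflow (t + busemann u (P0 (- l) (u 0)) (u 0)) v) (gflow t u))
       (dist_d1 (gflow (t + busemann u (P0 (- l) (u 0)) (u 0)) v) (fun s => P0 l (gflow t u s)))
   <= 12 * l.
Proof.
  intros Hl Ht0 Hgu Hut0 Hdx Hdy Hgv Hv0 [M HM] t Ht.
  assert (Hu : forall t, u t = W (exp (- (t - t0)))).
  { intro s. rewrite <- (geod_pv u t0 Hgu Hut0 Hdx Hdy (s - t0)). f_equal; ring. }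
  assert (He0 : 1 <= exp t0) by (apply exp_ge1; auto).
  set (e0 := exp t0) in *.
  assert (Hexp : forall s, exp (- (s - t0)) = e0 / exp s).
  { intro s. unfold e0. replace (- (s - t0)) with (t0 + - s) by ring. rewrite exp_plus, exp_neg_inv. reflexivity. }
  assert (Hu0 : u 0 = W e0) by (rewrite Hu; f_equal; unfold e0; f_equal; ring).
  assert (HuH : forall s, inH (u s)) by apply (proj1 Hgu).
  assert (HvH : forall s, inH (v s)) by apply (proj1 Hgv).
  assert (HPH : forall z, inH z -> inH (P0 l z)) by (unfold inH, P0; simpl; auto).
  assert (HPH' : forall z, inH z -> inH (P0 (- l) z)) by (unfold inH, P0; simpl; auto).
  assert (Htau : busemann u (P0 (- l) (u 0)) (u 0) = ln (Nn e0 l / (4 * e0 ^ 2))).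
  { rewrite (busemann_W u t0); auto. rewrite Hu0. apply tau_val; auto. }
  rewrite Htau.
  assert (HN := Nn_pos e0 l ltac:(lra) Hl).
  assert (He02 : 0 < e0 ^ 2) by (apply pow_lt; lra).
  assert (HNr : 1 <= Nn e0 l / (4 * e0 ^ 2)).
  { apply Rmult_le_reg_r with (4 * e0 ^ 2); [lra|]. field_simplify; [|lra].
    unfold Nn. assert (0 <= l ^ 2 * (1 + e0 ^ 2)) by (apply Rmult_le_pos; nra). nra. }
  set (tau := ln (Nn e0 l / (4 * e0 ^ 2))).
  assert (Etau : exp tau = Nn e0 l / (4 * e0 ^ 2)) by (unfold tau; apply exp_ln; lra).
  assert (Htau0 : 0 <= tau) by (unfold tau; rewrite <- ln_1; apply ln_le; lra).
  assert (Htau2 : tau <= 2 * l).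
  { unfold tau. replace (2 * l) with (ln (exp (2 * l))) by apply ln_exp. apply ln_le; [lra|].
    assert (Hq : exp (2 * l) = exp l * exp l) by (rewrite <- exp_plus; f_equal; ring).
    assert (H1 := exp_ineq1_le l).
    assert (Nn e0 l / (4 * e0 ^ 2) <= (1 + l) ^ 2).
    { apply Rmult_le_reg_r with (4 * e0 ^ 2); [lra|].
      replace (Nn e0 l / (4 * e0 ^ 2) * (4 * e0 ^ 2)) with (Nn e0 l) by (field; lra).
      unfold Nn. assert (1 <= e0 ^ 2) by nra. assert (0 <= l ^ 2) by apply pow2_ge_0. nra. }
    rewrite Hq. nra. }
  set (Jf := mob_act (Jm l)).
  assert (HJd : 0 < mdet (Jm l)) by (rewrite Jm_det; lra).
  assert (HJH : forall z w, inH z -> inH w -> hdist (Jf z) (Jf w) = hdist z w) by (intros; apply hdist_mob; auto).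
  assert (HJP : forall s, Jf (P0 l (u s)) = (1 / 2, / (2 * e0) * exp s)).
  { intro s. unfold Jf. rewrite Hu, Hexp, J_P0W; auto.
    - f_equal. field. split; [lra|apply Rgt_not_eq, exp_pos].
    - apply Rdiv_lt_0_compat; [lra|apply exp_pos]. }
  assert (HvJ : forall s, Jf (v s) = (aJ e0 l, bJ e0 l * exp s)).
  { apply (vert_ident (fun s => Jf (v s)) (aJ e0 l) (bJ e0 l) (1 / 2) (/ (2 * e0)) M).
    - split. intro; apply mob_inH; auto. intros; unfold Jf; rewrite hdist_mob; auto. apply (proj2 Hgv).
    - simpl. rewrite Hv0, Hu0. unfold Jf. apply J_W0; auto; lra.
    - apply Rinv_0_lt_compat; lra.
    - intros s Hs. rewrite <- HJP. unfold Jf. rewrite hdist_mob; auto. }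
  assert (HPU : forall T, t0 <= T -> hdist (v (T + tau)) (P0 l (u T)) <= 2 * l).
  { intros T HT. rewrite <- HJH; auto. rewrite HvJ, HJP.
    replace (bJ e0 l * exp (T + tau)) with (/ (2 * e0) * exp T).
    - apply pu_bound; auto. unfold e0; apply exp_mono; auto.
    - rewrite exp_plus, Etau. unfold bJ. field. split; lra. }
  assert (HUB : forall T, 0 <= T <= t0 + 1 -> hdist (v (T + tau)) (u T) <= tau + 3 * l).
  { intros T HT. rewrite <- HJH; auto. rewrite HvJ.
    replace (bJ e0 l * exp (T + tau)) with (exp tau * (bJ e0 l * exp T))
      by (rewrite exp_plus; ring).
    eapply Rle_trans.
    - apply vert_tri. apply Rmult_lt_0_compat; [unfold bJ; apply Rdiv_lt_0_compat; lra|apply exp_pos].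
      lra. unfold Jf; apply mob_inH; auto.
    - rewrite ln_exp. assert (hdist (aJ e0 l, bJ e0 l * exp T) (Jf (u T)) <= 3 * l); [|lra].
      unfold Jf. rewrite Hu, Hexp. apply u_bound; auto.
      + apply exp_ge1; lra.
      + assert (exp T <= exp (t0 + 1)) by (apply exp_mono; lra).
        rewrite exp_plus in H. fold e0 in H. assert (exp 1 <= 3) by apply exp_le_3. nra. }
  unfold dist_d1, gflow.
  replace (0 + (t + tau)) with (t + tau) by ring. replace (0 + t) with t by ring.
  replace (1 + (t + tau)) with ((1 + t) + tau) by ring.
  destruct (Rle_or_lt t0 t) as [Hc|Hc].
  - eapply Rle_trans; [apply Rmin_r|].
    assert (hdist (v (t + tau)) (P0 l (u t)) <= 2 * l) by (apply HPU; lra).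
    assert (hdist (v (1 + t + tau)) (P0 l (u (1 + t))) <= 2 * l) by (apply HPU; lra).
    lra.
  - eapply Rle_trans; [apply Rmin_l|].
    assert (hdist (v (t + tau)) (u t) <= tau + 3 * l) by (apply HUB; lra).
    assert (hdist (v (1 + t + tau)) (u (1 + t)) <= tau + 3 * l) by (apply HUB; lra).
    lra.
Qed.

Definition Dg1 (G : mob) (z : pt) (a b : R) :=
  let p := mc G * fst z + md G in let q := mc G * snd z in
  mdet G * (a * (p ^ 2 - q ^ 2) + 2 * p * q * b) / (p ^ 2 + q ^ 2) ^ 2.
Definition Dg2 (G : mob) (z : pt) (a b : R) :=
  let p := mc G * fst z + md G in let q := mc G * snd z in
  mdet G * (b * (p ^ 2 - q ^ 2) - 2 * p * q * a) / (p ^ 2 + q ^ 2) ^ 2.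

Lemma mob_derive G f t a b : 0 < mdet G -> inH (f t) ->
  is_derive (fun r => fst (f r)) t a -> is_derive (fun r => snd (f r)) t b ->
  is_derive (fun r => fst (mob_act G (f r))) t (Dg1 G (f t) a b) /\
  is_derive (fun r => snd (mob_act G (f r))) t (Dg2 G (f t) a b).
Proof.
  intros HG Hf Ha Hb.
  assert (HD := Dm_pos G (f t) ltac:(lra) Hf). unfold Dm in HD.
  set (X := fun r => fst (f r)) in *. set (Y := fun r => snd (f r)) in *.
  assert (Ef : forall r, f r = (X r, Y r)) by (intro; unfold X, Y; destruct (f r); reflexivity).
  assert (DX : Derive (fun x => X x) t = a) by (apply is_derive_unique; exact Ha).
  assert (DY : Derive (fun x => Y x) t = b) by (apply is_derive_unique; exact Hb).
  unfold Dg1, Dg2, mdet. rewrite (Ef t). cbn [fst snd].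
  change (fst (f t)) with (X t) in HD. change (snd (f t)) with (Y t) in HD.
  destruct G as [ga gb gc gd]. cbn [ma mb mc md] in *.
  split.
  - apply (is_derive_ext (fun r => ((ga * X r + gb) * (gc * X r + gd) + ga * gc * Y r ^ 2) /
                                  ((gc * X r + gd) ^ 2 + (gc * Y r) ^ 2))).
    { intro r. rewrite (Ef r). reflexivity. }
    auto_derive.
    + repeat split; try (eexists; eassumption). lra.
    + rewrite DX, DY. field. lra.
  - apply (is_derive_ext (fun r => (ga * gd - gb * gc) * Y r / ((gc * X r + gd) ^ 2 + (gc * Y r) ^ 2))).
    { intro r. rewrite (Ef r). reflexivity. }
    auto_derive.
    + repeat split; try (eexists; eassumption). lra.
    + rewrite DX, DY. field. lra.
Qed.

Lemma Dg_norm G z a b : 0 < mdet G -> inH z -> a ^ 2 + b ^ 2 = snd z ^ 2 ->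
  Dg1 G z a b ^ 2 + Dg2 G z a b ^ 2 = snd (mob_act G z) ^ 2.
Proof.
  intros HG Hz Hab. assert (HD := Dm_pos G z ltac:(lra) Hz). unfold Dm in HD.
  rewrite mob_act_eq. unfold Dg1, Dg2, Dm. cbn [fst snd].
  set (p := mc G * fst z + md G) in *. set (q := mc G * snd z) in *.
  transitivity (mdet G ^ 2 * (a ^ 2 + b ^ 2) / (p ^ 2 + q ^ 2) ^ 2).
  - field. lra.
  - rewrite Hab. field. lra.
Qed.

Definition Aff (sg k c : R) (z : pt) : pt := (sg * (fst z - k) / c, snd z / c).

Lemma hdist_aff sg k c z w : sg ^ 2 = 1 -> 0 < c -> inH z -> inH w ->
  hdist (Aff sg k c z) (Aff sg k c w) = hdist z w.
Proof.
  intros Hs Hc Hz Hw. rewrite !hdist_Qd. f_equal. unfold Qd, Aff, inH in *; cbn [fst snd].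
  destruct z as [x y]; destruct w as [x' y']; cbn [fst snd] in *.
  transitivity (1 + (sg ^ 2 * (x - x') ^ 2 + (y - y') ^ 2) / (2 * y * y')).
  - field. lra.
  - rewrite Hs. f_equal. f_equal. ring.
Qed.

Lemma transl_form m c : mdet m = 1 -> 0 < c ->
  (forall x, snd (mob_act m (x, c)) = c) ->
  forall z, inH z -> mob_act m z = (fst z + mb m * md m, snd z).
Proof.
  intros Hd Hc H z Hz.
  assert (HD : forall x, (mc m * x + md m) ^ 2 + (mc m * c) ^ 2 = 1).
  { intro x. specialize (H x). rewrite mob_act_eq in H. cbn [fst snd] in H. rewrite Hd in H.
    assert (HDp : 0 < Dm m (x, c)) by (apply Dm_pos; simpl; lra).
    unfold Dm in *; cbn [fst snd] in *.
    apply (f_equal (fun t => t * ((mc m * x + md m) ^ 2 + (mc m * c) ^ 2) / c)) in H.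
    field_simplify in H; lra. }
  assert (H0 := HD 0). assert (H1 := HD 1). assert (H2 := HD (-1)).
  assert (Hc0 : mc m = 0).
  { assert (mc m ^ 2 = 0) by nra. apply Rsqr_0_uniq. unfold Rsqr. simpl in H3. lra. }
  rewrite Hc0 in *.
  assert (Hd2 : md m ^ 2 = 1) by nra.
  unfold mdet in Hd. rewrite Hc0 in Hd.
 assert (Hdd : md m * md m = 1) by (simpl in Hd2; lra).
  assert (Ha : ma m = md m).
  { assert (Hd' : ma m * md m = 1) by lra.
    transitivity (ma m * (md m * md m)). rewrite Hdd; ring.
    transitivity ((ma m * md m) * md m). ring. rewrite Hd'; ring. }
  rewrite mob_act_eq. unfold Dm, mdet. rewrite Hc0, Ha. cbn [fst snd].
  destruct z as [x y]; cbn [fst snd].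
  replace ((0 * x + md m) ^ 2 + (0 * y) ^ 2) with 1 by (simpl; lra).
  f_equal.
  - transitivity ((md m * md m) * x + mb m * md m). field. rewrite Hdd. ring.
  - transitivity ((md m * md m) * y). field. rewrite Hdd. ring.
Qed.

Lemma deriv_cont (Y : R -> R) : (forall s, ex_derive Y s) -> continuity Y.
Proof.
  intros H x. apply continuity_pt_filterlim.
  apply (@ex_derive_continuous R_AbsRing R_NormedModule). apply H.
Qed.

Lemma pos_deriv_step (Y : R -> R) s0 d l : is_derive Y s0 d -> 0 < d -> 0 < l ->
  exists e, 0 < e < l /\ Y s0 < Y (s0 + e).
Proof.
  intros HD Hd Hl. apply is_derive_Reals in HD.
  destruct (HD (d / 2) ltac:(lra)) as [del Hdel].
  set (e := Rmin (del / 2) (l / 2)).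
  assert (He1 : 0 < e) by (unfold e; apply Rmin_pos; [destruct del; simpl; lra|lra]).
  assert (He2 : e <= l / 2) by apply Rmin_r.
  assert (He3 : e <= del / 2) by apply Rmin_l.
  exists e. split; [lra|].
  assert (Hp : 0 < del) by (destruct del; simpl; lra).
  specialize (Hdel e ltac:(lra) ltac:(rewrite Rabs_right; lra)).
  apply Rabs_def2 in Hdel. destruct Hdel as [_ H2].
  assert (0 < (Y (s0 + e) - Y s0) / e) by lra.
  assert (0 < Y (s0 + e) - Y s0); [|lra].
  replace (Y (s0 + e) - Y s0) with ((Y (s0 + e) - Y s0) / e * e) by (field; lra).
  apply Rmult_lt_0_compat; lra.
Qed.

Lemma no_backstep (Y : R -> R) s0 d l : (forall s, ex_derive Y s) -> is_derive Y s0 d -> 0 < d -> 0 < l ->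
  Y (s0 + l) < Y s0 -> exists s, s <> s0 /\ Y s = Y s0.
Proof.
  intros Hex HD Hd Hl Hlt.
  destruct (pos_deriv_step Y s0 d l HD Hd Hl) as [e [He HY]].
  destruct (IVT (fun s => Y s0 - Y s) (s0 + e) (s0 + l)) as [z [Hz Hz0]].
  - intro x. apply continuity_pt_minus. apply continuity_pt_const. intros a b; reflexivity.
    apply deriv_cont; auto.
  - lra.
  - lra.
  - lra.
  - exists z. split; lra.
Qed.

Lemma sign_lemma (X : R -> R) (c l be s0 : R) :
  0 < c -> 0 < l ->
  (forall s, ex_derive X s) -> (forall s, Derive X s ^ 2 = c ^ 2) ->
  (forall s1 s2, X s1 = X s2 -> s1 = s2) ->
  (forall s, X (s + l) = X s + be) ->
  be = Derive X s0 * l.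
Proof.
  intros Hc Hl Hex Hsq Hinj Hper.
  destruct (MVT_gen X s0 (s0 + l) (Derive X)) as [xi [Hxi Hm]].
  - intros x _. apply Derive_correct. apply Hex.
  - intros x _. apply deriv_cont; auto.
  - rewrite Hper in Hm. replace (X s0 + be - X s0) with be in Hm by ring.
    replace (s0 + l - s0) with l in Hm by ring.
    assert (Hsq1 := Hsq xi). assert (Hsq0 := Hsq s0).
    assert (Heq : Derive X xi = Derive X s0 \/ Derive X xi = - Derive X s0).
    { assert ((Derive X xi - Derive X s0) * (Derive X xi + Derive X s0) = 0) by (simpl in *; nra).
      apply Rmult_integral in H. destruct H; [left|right]; lra. }
    destruct Heq as [E|E]. { rewrite Hm, E. ring. }
    exfalso.
    assert (Hd0 : Derive X s0 <> 0) by (intro F; rewrite F in Hsq0; simpl in Hsq0; nra).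
    destruct (Rlt_or_le 0 (Derive X s0)) as [Hp|Hn].
    + destruct (no_backstep X s0 (Derive X s0) l Hex (Derive_correct _ _ (Hex s0)) Hp Hl) as [s [Hs1 Hs2]].
      * rewrite Hper, Hm, E. assert (0 < Derive X s0 * l) by (apply Rmult_lt_0_compat; lra). lra.
      * apply Hs1, Hinj, Hs2.
    + assert (Hn' : 0 < - Derive X s0) by lra.
      assert (HexN : forall s, ex_derive (fun x => - X x) s).
      { intro s. auto_derive. apply Hex. }
      assert (HdN : is_derive (fun x => - X x) s0 (- Derive X s0)).
      { auto_derive. apply Hex. rewrite Rmult_1_l. reflexivity. }
      destruct (no_backstep (fun x => - X x) s0 _ l HexN HdN Hn' Hl) as [s [Hs1 Hs2]].
      * rewrite Hper, Hm, E. assert (0 < - Derive X s0 * l) by (apply Rmult_lt_0_compat; lra). lra.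
      * apply Hs1, Hinj. lra.
Qed.

Lemma horo_frame S : is_horocycle S -> exists G c, mdet G = 1 /\ 0 < c /\
  (forall z, S z -> inH z /\ snd (mob_act G z) = c) /\
  (forall w, inH w -> snd w = c -> S (mob_act (mob_inv G) w)).
Proof.
  intros [[c [Hc HS]] | [x0 [r [Hr HS]]]].
  - exists (Mob 1 0 0 1), c. split; [unfold mdet; simpl; ring|]. split; auto. split.
    + intros z Hz. apply HS in Hz. unfold inH. split; [lra|].
      destruct z as [x y]; unfold mob_act; cbn [fst snd ma mb mc md] in *. field_simplify; auto. 
    + intros w Hw Hwc. apply HS. destruct w as [x y]; unfold mob_inv, mob_act; cbn [fst snd ma mb mc md] in *.
      rewrite <- Hwc. field.
  - exists (Mob 0 (-1) 1 (- x0)), (/ (2 * r)). split; [unfold mdet; simpl; ring|].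
    split; [apply Rinv_0_lt_compat; lra|]. split.
    + intros z Hz. apply HS in Hz. destruct Hz as [Hc Hy]. unfold inH. split; auto.
      destruct z as [x y]; unfold mob_act; cbn [fst snd ma mb mc md] in *.
      replace ((1 * x + - x0) ^ 2 + (1 * y) ^ 2) with (2 * r * y) by (simpl in *; nra).
      field. lra.
    + intros w Hw Hwc. apply HS. destruct w as [x y]; unfold inH, mob_inv, mob_act in *; cbn [fst snd ma mb mc md] in *.
      assert (Hy2 : 0 < y ^ 2) by (apply pow_lt; auto).
      assert (HD : 0 < x ^ 2 + y ^ 2) by (generalize (pow2_ge_0 x); lra).
      replace ((- - (1) * x + 0) ^ 2 + (- - (1) * y) ^ 2) with (x ^ 2 + y ^ 2) by ring.
      assert (Hry : 2 * r * y = 1) by (rewrite Hwc; field; lra).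
      split.
      * transitivity ((x ^ 2 + y ^ 2) / (x ^ 2 + y ^ 2) ^ 2 - 2 * r * y / (x ^ 2 + y ^ 2) + r ^ 2).
        -- field. lra.
        -- rewrite Hry. field. lra.
      * apply Rdiv_lt_0_compat. replace ((- x0 * 0 - - (1) * - - (1))) with 1 by ring. lra. ring_simplify. lra.
Qed.

Lemma derive_aff (f : R -> R) t d k1 k2 k3 : k3 <> 0 -> is_derive f t d ->
  is_derive (fun r => k1 * (f r - k2) / k3) t (k1 * d / k3).
Proof.
  intros Hk Hf. auto_derive. exists d; exact Hf.
  replace (Derive (fun x => f x) t) with d by (symmetry; apply is_derive_unique; exact Hf).
  field. auto.
Qed.

Lemma frame S p h ell u :
  is_horocycle S -> is_parabolic p -> pos_param S p h ell -> is_geodesic u -> tangent_to u h ->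
  exists F t0, 0 <= t0 /\ (forall z, inH z -> inH (F z)) /\
    (forall z w, inH z -> inH w -> hdist (F z) (F w) = hdist z w) /\
    (forall z, inH z -> F (mob_act p z) = P0 ell (F z)) /\
    F (u t0) = (0, 1) /\ is_derive (fun r => fst (F (u r))) t0 1 /\
    is_derive (fun r => snd (F (u r))) t0 0.
Proof.
  intros Hhor Hpar [[HhS [Hsurj [Hinj Hder]]] [Hell Hper]] Hgu [t0 [s0 [a [b [Ht0 [Hus [Hua [Hub [Hha Hhb]]]]]]]]].
  destruct (horo_frame S Hhor) as [G [c [HG [Hc [HS1 HS2]]]]].
  assert (Hp : mdet p = 1) by (destruct Hpar; unfold mdet; lra).
  assert (HGp : 0 < mdet G) by lra.
  assert (Hpp : 0 < mdet p) by lra.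
  assert (HGi : 0 < mdet (mob_inv G)) by (rewrite mdet_inv; lra).
  set (p' := mmul G (mmul p (mob_inv G))).
  assert (Hp'd : mdet p' = 1) by (unfold p'; rewrite !mdet_mul, mdet_inv, Hp, HG; ring).
  assert (Hp'c : forall w, inH w -> mob_act p' w = mob_act G (mob_act p (mob_act (mob_inv G) w))).
  { intros w Hw. unfold p'. rewrite <- mob_comp; auto.
    - rewrite <- mob_comp; auto.
    - rewrite mdet_mul; nra. }
  assert (HGH : forall z, inH z -> inH (mob_act G z)) by (intros; apply mob_inH; auto).
  assert (HGiH : forall z, inH z -> inH (mob_act (mob_inv G) z)) by (intros; apply mob_inH; auto).
  assert (HpH : forall z, inH z -> inH (mob_act p z)) by (intros; apply mob_inH; auto).
  assert (Hline : forall x, snd (mob_act p' (x, c)) = c).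
  { intro x. assert (Hw : inH (x, c)) by (unfold inH; simpl; lra).
    rewrite Hp'c by auto. destruct (Hsurj _ (HS2 (x, c) Hw eq_refl)) as [s Hs].
    rewrite <- Hs, Hper. apply HS1, HhS. }
  assert (Hp'f := transl_form p' c Hp'd Hc Hline).
  set (be := mb p' * md p') in *.
  assert (HGpz : forall z, inH z -> mob_act G (mob_act p z) = (fst (mob_act G z) + be, snd (mob_act G z))).
  { intros z Hz. rewrite <- Hp'f by auto. rewrite Hp'c by auto. rewrite mob_inv_l; auto. }
  assert (HhH : forall s, inH (h s)) by (intro; apply HS1, HhS).
  set (X := fun s => fst (mob_act G (h s))).
  assert (HXc : forall s, snd (mob_act G (h s)) = c) by (intro; apply HS1, HhS).
  assert (HXp : forall s, X (s + ell) = X s + be).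
  { intro s. unfold X. rewrite <- Hper, HGpz by auto. reflexivity. }
  assert (HDh : forall s a' b', is_derive (fun r => fst (h r)) s a' -> is_derive (fun r => snd (h r)) s b' ->
                 a' ^ 2 + b' ^ 2 = snd (h s) ^ 2 ->
                 is_derive X s (Dg1 G (h s) a' b') /\ Dg2 G (h s) a' b' = 0 /\ Dg1 G (h s) a' b' ^ 2 = c ^ 2).
  { intros s a' b' Da Db Hn.
    destruct (mob_derive G h s a' b' HGp (HhH s) Da Db) as [D1 D2].
    assert (D2' : is_derive (fun r => snd (mob_act G (h r))) s 0).
    { apply (is_derive_ext (fun _ => c)). intro; symmetry; apply HXc. auto_derive; auto. }
    assert (E0 : Dg2 G (h s) a' b' = 0).
    { rewrite <- (is_derive_unique _ _ _ D2). apply is_derive_unique. exact D2'. }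
    split; [exact D1|]. split; [exact E0|].
    assert (Hn2 := Dg_norm G (h s) a' b' HGp (HhH s) Hn). rewrite E0, HXc in Hn2. simpl in *. lra. }
  assert (HexX : forall s, ex_derive X s).
  { intro s. destruct (Hder s) as [a' [b' [Da [Db Hn]]]]. exists (Dg1 G (h s) a' b'). apply (HDh s a' b' Da Db Hn). }
  assert (HsqX : forall s, Derive X s ^ 2 = c ^ 2).
  { intro s. destruct (Hder s) as [a' [b' [Da [Db Hn]]]]. destruct (HDh s a' b' Da Db Hn) as [D1 [_ Hq]].
    rewrite (is_derive_unique _ _ _ D1). exact Hq. }
  assert (HinjX : forall s1 s2, X s1 = X s2 -> s1 = s2).
  { intros s1 s2 E. apply Hinj.
    rewrite <- (mob_inv_l G (h s1)), <- (mob_inv_l G (h s2)) by auto. f_equal.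
    apply injective_projections; [exact E| rewrite !HXc; reflexivity]. }
  assert (Hbe := sign_lemma X c ell be s0 Hc Hell HexX HsqX HinjX HXp).
  set (al := Derive X s0) in *.
  assert (Hn0 : a ^ 2 + b ^ 2 = snd (h s0) ^ 2).
  { destruct (Hder s0) as [a' [b' [Da [Db Hn]]]].
    rewrite <- (is_derive_unique _ _ _ Da), <- (is_derive_unique _ _ _ Db) in Hn.
    rewrite (is_derive_unique _ _ _ Hha), (is_derive_unique _ _ _ Hhb) in Hn. exact Hn. }
  destruct (HDh s0 a b Hha Hhb Hn0) as [D1h [D2h Dsq]].
  assert (Hal : Dg1 G (h s0) a b = al) by (unfold al; symmetry; apply is_derive_unique; exact D1h).
  assert (HuH : inH (u t0)) by apply (proj1 Hgu).
  destruct (mob_derive G u t0 a b HGp HuH Hua Hub) as [D1u D2u].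
  rewrite Hus in D1u, D2u. rewrite Hal in D1u. rewrite D2h in D2u. rewrite Hal in Dsq.
  assert (Hcn : c <> 0) by lra.
  set (sg := al / c).
  assert (Hsg : sg ^ 2 = 1) by (unfold sg; field_simplify; [rewrite Dsq; field|]; auto).
  exists (fun z => Aff sg (X s0) c (mob_act G z)), t0.
  split; auto. split; [|split; [|split; [|split; [|split]]]].
  - intros z Hz. unfold Aff, inH. cbn [fst snd]. apply Rdiv_lt_0_compat; auto. apply HGH; auto.
  - intros z w Hz Hw. rewrite hdist_aff, hdist_mob; auto.
  - intros z Hz. rewrite HGpz by auto. unfold Aff, P0; cbn [fst snd]. f_equal.
    rewrite Hbe. unfold sg. field_simplify; auto. rewrite Dsq. field. auto.
  - rewrite Hus. unfold Aff. rewrite HXc. fold (X s0). f_equal; field; auto.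
  - replace 1 with (sg * al / c) by (unfold sg; field_simplify; [rewrite Dsq; field|]; auto).
    apply (derive_aff (fun r => fst (mob_act G (u r)))); auto.
  - replace 0 with (1 * 0 / c) by (field; auto).
    apply (is_derive_ext (fun r => 1 * (snd (mob_act G (u r)) - 0) / c)). { intro. unfold Aff. cbn [fst snd]. rewrite Rmult_1_l, Rminus_0_r. reflexivity. }
    apply (derive_aff (fun r => snd (mob_act G (u r)))); auto.
Qed.

Theorem mainTheorem4 (S : pt -> Prop) (p : mob) (h : R -> pt) (ell : R)
    (u v : R -> pt) :
  is_horocycle S -> is_parabolic p -> pos_param S p h ell ->
  is_geodesic u -> tangent_to u h ->
  is_winding p u v ->
  forall t : R, 0 <= t ->
    Rmin (dist_d1 (gflow (t + winding_time p u) v) (gflow t u))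
         (dist_d1 (gflow (t + winding_time p u) v)
             (fun s => mob_act p (gflow t u s)))
    <= 12 * ell.
Proof.
  intros Hhor Hpar Hpos Hgu Htan [Hgv [Hv0 [M HM]]] t Ht.
  destruct (frame S p h ell u Hhor Hpar Hpos Hgu Htan) as [F [t0 [Ht0 [FH [Fd [Fp [Fu0 [Fdx Fdy]]]]]]]].
  assert (Hell : 0 < ell) by (destruct Hpos as [_ [Hl _]]; exact Hl).
  assert (Hp : 0 < mdet p) by (destruct Hpar; unfold mdet; lra).
  assert (HuH : forall s, inH (u s)) by apply (proj1 Hgu).
  assert (HvH : forall s, inH (v s)) by apply (proj1 Hgv).
  assert (HpH : forall z, inH z -> inH (mob_act p z)) by (intros; apply mob_inH; auto).
  assert (Hpi : 0 < mdet (mob_inv p)) by (rewrite mdet_inv; auto).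
  set (u' := fun r => F (u r)). set (v' := fun r => F (v r)).
  assert (Hgu' : is_geodesic u').
  { split. intro; apply FH; auto. intros; unfold u'; rewrite Fd; auto. apply (proj2 Hgu). }
  assert (Hgv' : is_geodesic v').
  { split. intro; apply FH; auto. intros; unfold v'; rewrite Fd; auto. apply (proj2 Hgv). }
  assert (Hd1 : forall X Y, hdist (v X) (u Y) = hdist (v' X) (u' Y)) by (intros; unfold u', v'; rewrite Fd; auto).
  assert (Hd2 : forall X Y, hdist (v X) (mob_act p (u Y)) = hdist (v' X) (P0 ell (u' Y))).
  { intros; unfold u', v'. rewrite <- Fp by auto. rewrite Fd; auto. }
  assert (Hwt : winding_time p u = busemann u' (P0 (- ell) (u' 0)) (u' 0)).
  { unfold winding_time, busemann. f_equal. f_equal. apply functional_extensionality. intro r.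
    assert (E : P0 (- ell) (u' 0) = F (mob_act (mob_inv p) (u 0))).
    { unfold u'. rewrite <- (mob_inv_r p (u 0)) at 1 by auto. rewrite Fp by (apply mob_inH; auto).
      unfold P0; simpl. destruct (F (mob_act (mob_inv p) (u 0))). simpl. f_equal; ring. }
    rewrite E. unfold u'. rewrite !Fd; auto. apply mob_inH; auto. }
  assert (Hcore := core ell t0 u' v' Hell Ht0 Hgu' Fu0 Fdx Fdy Hgv').
  rewrite Hwt. unfold dist_d1, gflow in *.
  rewrite !Hd1, !Hd2.
  apply Hcore; auto.
  - unfold v', u'. rewrite Hv0. reflexivity.
  - exists M. intros s Hs. rewrite <- Hd2. apply HM; auto.
Qed.
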